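(* With $H$, $f$, $V$ (basis $v^{(1)},\dots,v^{(m)}$, coaction $\rho(v^{(i)})=\sum_{j=1}^m v^{(j)}\otimes\sum_{g\in G_f}a_{ji}^gp_g$) and the induced comodule $\tilde V$ as in the context, with $V$ simple, the irreducible character of $\tilde V$ is $$\chi(\tilde V)=\sum_{i=1}^m\sum_{z\in T_f}\sum_{g\in G_f}\tau(z^{-1},g;f)^{-1}\tau(z^{-1}gz,z^{-1};f)\,a_{ii}^g\,p_{z^{-1}gz}\#(z^{-1}\triangleright f).$$
   Context: Standing setup: $\Bbbk$ is an algebraically closed field of characteristic $0$, $F$ a group (possibly infinite), $G$ a finite group, and $(F,G,\triangleleft,\triangleright)$ a matched pair: $\triangleright:G\times F\to F$ a left action of $G$ on the set $F$, $\triangleleft:G\times F\to G$ a right action of $F$ on the set $G$, with $g\triangleright(ff')=(g\triangleright f)((g\triangleleft f)\triangleright f')$ and $(gg')\triangleleft f=(g\triangleleft(g'\triangleright f))(g'\triangleleft f)$. Maps $\sigma:G\times F\times F\to\Bbbk^\times$ and $\tau:G\times G\times F\to\Bbbk^\times$ satisfy: $\sigma(g;1_F,f)=\sigma(g;f,1_F)=\sigma(1_G;f,f')=1$; $\sigma(g\triangleleft f;f',f'')\sigma(g;f,f'f'')=\sigma(g;f,f')\sigma(g;ff',f'')$; $\tau(1_G,g;f)=\tau(g,1_G;f)=\tau(g,g';1_F)=1$; $\tau(g,g';g''\triangleright f)\tau(gg',g'';f)=\tau(g,g'g'';f)\tau(g',g'';f)$; and $\sigma(gg';f,f')\tau(g,g';ff')=\sigma(g;g'\triangleright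 f,(g'\triangleleft f)\triangleright f')\sigma(g';f,f')\tau(g,g';f)\tau(g\triangleleft(g'\triangleright f),g'\triangleleft f;f')$. $H=\Bbbk^G{}^\tau\#_\sigma\Bbbk F$ has basis $\{p_g\#f\}$, product $(p_g\#f)(p_{g'}\#f')=\delta_{g\triangleleft f,g'}\sigma(g;f,f')p_g\#ff'$, coproduct $\Delta(p_g\#f)=\sum_{x\in G}\tau(gx^{-1},x;f)\,p_{gx^{-1}}\#(x\triangleright f)\otimes p_x\#f$, counit $\varepsilon(p_g\#f)=\delta_{g,1_G}$. Fix $f\in F$; $G_f=\{g\in G\mid g\triangleright f=f\}$; $T_f$ a complete set of right coset representatives of $G_f$ in $G$ containing $1_G$. $\Bbbk^{G_f}_{\tau_f}$ is the coalgebra with basis $\{p_g\}_{g\in G_f}$, $\Delta(p_g)=\sum_{x\in G_f}\tau(gx^{-1},x;f)p_{gx^{-1}}\otimes p_x$, $\varepsilon(p_g)=\delta_{g,1_G}$. $H'_f$ is the coalgebra with basis $\{p_g\#f'\mid g\in G_f,f'\in F\}$, $\Delta(p_g\#f')=\sum_{x\in G_f}\tau(gx^{-1},x;f')p_{gx^{-1}}\#(x\triangleright f')\otimes p_x\#f'$; $H$ is a left $H'_f$-comodule via $(\pi_f\otimes\mathrm{id})\Delta$ ($\pi_f$ kills $p_g\#f'$, $g\notin G_f$). For a right $\Bbbk^{G_f}_{\tau_f}$-comodule $V$ with $\rho(v)=\sum_{g\in G_f}v_g\otimes p_g$, $V\otimes\Bbbk f$ is a right $H'_f$-comodule via $v\otimes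 f\mapsto\sum_g v_g\otimes f\otimes p_g\#f$, and the induced comodule $\tilde V=(V\otimes\Bbbk f)\Box_{H'_f}H$ (cotensor product) is a right $H$-comodule via $\mathrm{id}\otimes\Delta$. The character of a finite-dimensional right comodule $(M,\rho)$ with basis $m_1,\dots,m_n$ and dual basis $m_i^*$ is $\chi(M)=\sum_i(m_i^*\otimes\mathrm{id})\rho(m_i)\in H$. *)

(* Defs.v *)
From HB Require Import structures.
From mathcomp Require Import all_boot all_order all_algebra all_fingroup.

Set Implicit Arguments.
Unset Strict Implicit.
Unset Printing Implicit Defensive.

Import GRing.Theory.
Local Open Scope ring_scope.

Section MatchedPairHopf.

Variables (k : fieldType) (F : groupType) (G : finGroupType).
(* lact g f = g |> f  (left action of G on the set F)
   ract g f = g <| f  (right action of F on the set G) *)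
Variables (lact : G -> F -> F) (ract : G -> F -> G).

Definition matched_pair : Prop :=
  (forall f : F, lact 1%g f = f) /\
  (forall (g g' : G) (f : F), lact (g * g')%g f = lact g (lact g' f)) /\
  (forall g : G, ract g 1%g = g) /\
  (forall (g : G) (f f' : F), ract g (f * f')%g = ract (ract g f) f') /\
  (forall (g : G) (f f' : F),
      lact g (f * f')%g = (lact g f * lact (ract g f) f')%g) /\
  (forall (g g' : G) (f : F),
      ract (g * g')%g f = (ract g (lact g' f) * ract g' f)%g).

Variables (sigma : G -> F -> F -> k) (tau : G -> G -> F -> k).

Definition sigma_tau_conditions : Prop :=
  (forall g f f', sigma g f f' != 0) /\
  (forall g g' f, tau g g' f != 0) /\
  (forall g f, sigma g 1%g f = 1) /\
  (forall g f, sigma g f 1%g = 1) /\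
  (forall f f', sigma 1%g f f' = 1) /\
  (forall g f f' f'',
      sigma (ract g f) f' f'' * sigma g f (f' * f'')%g
      = sigma g f f' * sigma g (f * f')%g f'') /\
  (forall g f, tau 1%g g f = 1) /\
  (forall g f, tau g 1%g f = 1) /\
  (forall g g', tau g g' 1%g = 1) /\
  (forall g g' g'' f,
      tau g g' (lact g'' f) * tau (g * g')%g g'' f
      = tau g (g' * g'')%g f * tau g' g'' f) /\
  (forall g g' f f',
      sigma (g * g')%g f f' * tau g g' (f * f')%g
      = sigma g (lact g' f) (lact (ract g' f) f') * sigma g' f f'
        * tau g g' f * tau (ract g (lact g' f)) (ract g' f) f').

(* Elements of H = k^G{}^tau #_sigma kF are represented by their coordinate
   functions  h : G -> F -> k  in the basis {p_g # f}  (h g f = coefficient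
   of p_g # f), required to be finitely supported.  Elements of H (x) H are
   represented by coordinate functions G -> F -> G -> F -> k in the basis
   {(p_g1 # f1) (x) (p_g2 # f2)}. *)
Definition Hfinsupp (h : G -> F -> k) : Prop :=
  exists s : seq F, forall g f, h g f != 0 -> f \in s.

Definition pb (g : G) (f : F) : G -> F -> k :=
  fun x y => ((x == g) && (y == f))%:R.

(* Coproduct Delta(p_g # f') = sum_x tau(g x^-1, x; f') p_{g x^-1} # (x |> f')
   (x) p_x # f', extended linearly: coefficient of (p_g1 # f1) (x) (p_g2 # f2)
   in Delta h.  (In the linear extension the F-component f' of the source
   basis vector is the F-component of the right tensor factor, so the sum over
   f' collapses to f' = f2.) *)
Definition Hcoprod (h : G -> F -> k) : G -> F -> G -> F -> k :=
  fun g1 f1 g2 f2 =>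
    \sum_(g : G) \sum_(x : G)
      h g f2 * tau (g * x^-1)%g x f2
        * ((g * x^-1)%g == g1)%:R * (lact x f2 == f1)%:R * (x == g2)%:R.

Variable f : F.

Definition stab : {set G} := [set g : G | lact g f == f].

(* left H'_f-coaction on H:  lambda = (pi_f (x) id) Delta, where pi_f kills
   p_g # f' for g \notin G_f.  Coordinates in the basis
   {(p_g1 # f1) (x) (p_g2 # f2) : g1 \in G_f}. *)
Definition Hlcoact (h : G -> F -> k) : G -> F -> G -> F -> k :=
  fun g1 f1 g2 f2 => (g1 \in stab)%:R * Hcoprod h g1 f1 g2 f2.

Variables (m : nat) (a : 'I_m -> 'I_m -> G -> k).
(* V has basis v^(1..m) (indexed by 'I_m) and coaction
   rho(v^(i)) = sum_j v^(j) (x) sum_(g in G_f) a j i g  p_g  (a j i g = a_ji^g). *)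

(* V is a right comodule over the coalgebra k^{G_f}_{tau_f}:
   coassociativity and counit axioms, written in the bases. *)
Definition Vcomodule : Prop :=
  (forall i j g1 g2, g1 \in stab -> g2 \in stab ->
     \sum_(l < m) a j l g1 * a l i g2 = tau g1 g2 f * a j i (g1 * g2)%g) /\
  (forall i j, a j i 1%g = (i == j)%:R).

(* matrix of the map  w |-> (g-component of rho(w))  on row-coordinate
   vectors w of V *)
Definition coact_mx (g : G) : 'M[k]_m := \matrix_(i < m, j < m) a j i g.

(* V is a simple comodule: V <> 0 and its only subcomodules are 0 and V
   (a subspace W is a subcomodule iff rho(W) \subset W (x) k^{G_f}, i.e. W is
   stable under every coact_mx g, g \in G_f). *)
Definition Vsimple : Prop :=
  (0 < m)%N /\
  (forall W : 'M[k]_m,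
     (forall g, g \in stab -> stablemx W (coact_mx g)) ->
     (W == 0 :> 'M[k]_m) || row_full W).

(* Elements of (V (x) kf) (x) H are represented by coordinate functions
   w : 'I_m -> G -> F -> k,  w i g f' = coefficient of v^(i) (x) f (x) p_g # f'. *)
Definition VHfinsupp (w : 'I_m -> G -> F -> k) : Prop :=
  forall i, Hfinsupp (w i).

(* right H'_f-coaction on V (x) kf:
   v^(i) (x) f |-> sum_j v^(j) (x) f (x) sum_(g in G_f) a j i g  p_g # f;
   coefficient of v^(j) (x) f (x) p_g1 # f1 in the image of v^(i) (x) f. *)
Definition VFcoact (j i : 'I_m) (g1 : G) (f1 : F) : k :=
  (g1 \in stab)%:R * (f1 == f)%:R * a j i g1.

(* membership in the cotensor product (V (x) kf) \Box_{H'_f} H: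
   (rho_{V (x) kf} (x) id) w = (id (x) lambda) w, compared coordinatewise in
   (V (x) kf) (x) H'_f (x) H. *)
Definition in_cotensor (w : 'I_m -> G -> F -> k) : Prop :=
  forall (j : 'I_m) (g1 : G) (f1 : F) (g2 : G) (f2 : F),
    \sum_(i < m) VFcoact j i g1 f1 * w i g2 f2 = Hlcoact (w j) g1 f1 g2 f2.

(* b_1, ..., b_n is a basis of the induced comodule
   Vt = (V (x) kf) \Box_{H'_f} H. *)
Definition induced_basis (n : nat) (b : 'I_n -> 'I_m -> G -> F -> k) : Prop :=
  (forall l, VHfinsupp (b l) /\ in_cotensor (b l)) /\
  (forall c : 'I_n -> k,
     (forall i g f', \sum_(l < n) c l * b l i g f' = 0) -> forall l, c l = 0) /\
  (forall w, VHfinsupp w -> in_cotensor w ->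
     exists c : 'I_n -> k,
       forall i g f', w i g f' = \sum_(l < n) c l * b l i g f').

(* the coaction id (x) Delta of Vt, written in the basis b:
   (id (x) Delta)(b_l) = sum_j b_j (x) c j l,  with c j l \in H.
   Then c j l = (b_j^* (x) id) rho(b_l), so the character of Vt is
   chi(Vt) = sum_l c l l. *)
Definition induced_coaction_coeffs (n : nat) (b : 'I_n -> 'I_m -> G -> F -> k)
    (c : 'I_n -> 'I_n -> G -> F -> k) : Prop :=
  (forall j l, Hfinsupp (c j l)) /\
  (forall l i g1 f1 g2 f2,
     Hcoprod (b l i) g1 f1 g2 f2 = \sum_(j < n) b j i g1 f1 * c j l g2 f2).

Definition character_from (n : nat) (c : 'I_n -> 'I_n -> G -> F -> k) :
    G -> F -> k :=
  fun g f' => \sum_(l < n) c l l g f'.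

Definition prop52_rhs (T : {set G}) : G -> F -> k :=
  fun g' f' =>
    \sum_(i < m) \sum_(z in T) \sum_(g in stab)
      (tau z^-1 g f)^-1 * tau (z^-1 * g * z)%g z^-1 f * a i i g
        * pb (z^-1 * g * z)%g (lact z^-1 f) g' f'.

End MatchedPairHopf.

(* Main.v *)
Require Import Defs.
From HB Require Import structures.
From mathcomp Require Import all_boot all_order all_algebra all_fingroup.
From Stdlib Require Import ClassicalEpsilon.
From mathcomp Require Import ring.

Set Implicit Arguments.
Unset Strict Implicit.
Unset Printing Implicit Defensive.

Import GRing.Theory.
Local Open Scope ring_scope.

Section Proof.
Variables (k : fieldType) (F : groupType) (G : finGroupType).
Variables (lact : G -> F -> F) (tau : G -> G -> F -> k) (f : F).
Hypothesis lact1 : forall x : F, lact 1%g x = x.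
Hypothesis lactM : forall (g g' : G) (x : F), lact (g * g')%g x = lact g (lact g' x).
Hypothesis tau0 : forall g g' x, tau g g' x != 0.
Hypothesis tau1l : forall g x, tau 1%g g x = 1.
Hypothesis tau1r : forall g x, tau g 1%g x = 1.
Hypothesis coc : forall g g' g'' x,
      tau g g' (lact g'' x) * tau (g * g')%g g'' x
      = tau g (g' * g'')%g x * tau g' g'' x.

Local Notation stab := (stab lact f).

Lemma lactV (z : G) : lact z (lact (z^-1)%g f) = f.
Proof. by rewrite -lactM mulgV lact1. Qed.

Lemma lactVK (z : G) x : lact (z^-1)%g (lact z x) = x.
Proof. by rewrite -lactM mulVg lact1. Qed.

Lemma stab1 : (1%g \in stab).
Proof. by rewrite inE lact1. Qed.

Lemma stabM (x y : G) : x \in stab -> y \in stab -> (x * y)%g \in stab.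
Proof. by rewrite !inE lactM => /eqP Hx /eqP ->; rewrite Hx. Qed.

Lemma stabV (x : G) : ((x^-1)%g \in stab) = (x \in stab).
Proof.
suff H : forall y : G, y \in stab -> (y^-1)%g \in stab.
  by apply/idP/idP => [/H|/H//]; rewrite invgK.
move=> y; rewrite !inE => /eqP Hy; apply/eqP.
rewrite -[in X in lact _ X]Hy. exact: lactVK.
Qed.

Lemma stabMl (x y : G) : x \in stab -> ((x * y)%g \in stab) = (y \in stab).
Proof.
move=> Hx; apply/idP/idP => [H|]; last exact: stabM.
by rewrite -(mulKg x y); apply: stabM => //; rewrite stabV.
Qed.

Lemma Hcoprod_E (h : G -> F -> k) g1 f1 g2 f2 :
  Hcoprod lact tau h g1 f1 g2 f2 =
  h (g1 * g2)%g f2 * tau g1 g2 f2 * (lact g2 f2 == f1)%:R.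
Proof.
rewrite /Hcoprod (bigD1 (g1 * g2)%g) //=.
have -> : \sum_(g | g != (g1 * g2)%g) \sum_(x : G)
      h g f2 * tau (g * x^-1)%g x f2 * ((g * x^-1)%g == g1)%:R *
      (lact x f2 == f1)%:R * (x == g2)%:R = 0.
  apply: big1 => g Hg; apply: big1 => x _.
  case Hx: (x == g2); last by rewrite mulr0. move/eqP: Hx => ->.
  have -> : ((g * g2^-1)%g == g1) = false.
    by apply/negbTE; apply: contra Hg => /eqP <-; rewrite mulgKV.
  by rewrite !(mulr0, mul0r).
rewrite addr0 (bigD1 g2) //= big1 ?addr0; last by move=> x /negbTE ->; rewrite mulr0.
by rewrite mulgK !eqxx !mulr1.
Qed.


Lemma orb_mem (g : G) x : lact g x = f -> x \in [seq lact y f | y <- enum G].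
Proof.
move=> Hgx; apply/mapP; exists (g^-1)%g; first by rewrite mem_enum.
by rewrite -Hgx lactVK.
Qed.

Variables (T : {set G}) (m : nat) (a : 'I_m -> 'I_m -> G -> k).
Hypothesis Ttrans : is_transversal T (rcosets stab [set: G]) [set: G].
Hypothesis Vcoass : forall i j g1 g2, g1 \in stab -> g2 \in stab ->
     \sum_(l < m) a j l g1 * a l i g2 = tau g1 g2 f * a j i (g1 * g2)%g.
Hypothesis Vcounit : forall i j, a j i 1%g = (i == j)%:R.

Lemma Tuniq (g : G) : exists2 z0, z0 \in T &
  forall z, z \in T -> (((g * z^-1)%g \in stab) = (z == z0)).
Proof.
case/and3P: Ttrans => _ _ /forall_inP HT.
have := HT (rcoset stab g) (imset_f _ (in_setT g)).
rewrite rcosetE => /cards1P [z0 Hz0].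
have : z0 \in T :&: (stab :* g)%g by rewrite Hz0 set11.
rewrite inE => /andP [Tz0 _]; exists z0 => // z Tz.
rewrite -stabV invMg invgK -mem_rcoset.
by rewrite -[z \in _]andTb -Tz -in_setI Hz0 in_set1.
Qed.

Definition W := 'I_m -> G -> F -> k.
Definition psi (l : 'I_m) (z : G) (w : W) : k := w l z (lact (z^-1)%g f).
Definition e (l : 'I_m) (z : G) : W := fun j g x =>
  (x == lact (z^-1)%g f)%:R * ((g * z^-1)%g \in stab)%:R *
  (tau (g * z^-1)%g z (lact (z^-1)%g f))^-1 * a j l (g * z^-1)%g.
Definition phi (g2 : G) (f2 : F) (w : W) : W := fun i g1 f1 =>
  Hcoprod lact tau (w i) g1 f1 g2 f2.

Lemma supp (w : W) j g x : in_cotensor lact tau f a w -> w j g x != 0 ->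
  lact g x = f.
Proof.
move=> Hw Hne; apply/eqP; apply: contraNT Hne => Hn.
have := Hw j 1%g (lact g x) g x.
rewrite /VFcoact /Hlcoact Hcoprod_E stab1 mul1g tau1l eqxx big1.
  by move=> /esym; rewrite !mulr1 mul1r => ->.
by move=> i _; rewrite (negbTE Hn) !(mulr0, mul0r).
Qed.

Lemma propag (w : W) j (h g : G) x : in_cotensor lact tau f a w ->
  h \in stab -> lact g x = f ->
  \sum_(i < m) a j i h * w i g x = w j (h * g)%g x * tau h g x.
Proof.
move=> Hw Hh Hgx; have := Hw j h f g x.
rewrite /VFcoact /Hlcoact Hcoprod_E Hh Hgx eqxx !mul1r mulr1 => <-.
by apply: eq_bigr => i _; rewrite !mul1r.
Qed.


Lemma recon (w : W) j g x : in_cotensor lact tau f a w ->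
  w j g x = \sum_(l < m) \sum_(z in T) psi l z w * e l z j g x.
Proof.
move=> Hw.
case: (eqVneq (lact g x) f) => Hgx; last first.
  have -> : w j g x = 0 by apply/eqP; apply: contraNT Hgx => /(supp Hw) ->.
  symmetry; apply: big1 => l _; apply: big1 => z _; rewrite /e.
  case: (eqVneq x (lact (z^-1)%g f)) => [Ex|_]; last by rewrite !(mulr0, mul0r).
  case Hs: ((g * z^-1)%g \in stab); last by rewrite !(mulr0, mul0r).
  move: Hgx; rewrite Ex -{1}(mulgKV z g) lactM lactV.
  by move: Hs; rewrite inE => /eqP ->; rewrite eqxx.
case: (Tuniq g) => z0 Tz0 Hu.
rewrite exchange_big (bigD1 z0) //= addrC big1 ?add0r; last first.
  move=> z /andP [Tz Hz]; apply: big1 => l _.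
  by rewrite /e Hu // (negbTE Hz) !(mulr0, mul0r).
have Hh : (g * z0^-1)%g \in stab by rewrite Hu // eqxx.
have Ex : x = lact (z0^-1)%g f.
  have : lact z0 x = f.
    rewrite -{1}(mulKg (g * z0^-1)%g z0) mulgKV lactM Hgx.
    by move: Hh; rewrite -stabV inE => /eqP.
  by move=> <-; rewrite lactVK.
rewrite /e /psi Ex eqxx Hh.
have P := propag j Hw Hh (lactV z0); rewrite mulgKV in P.
transitivity ((tau (g * z0^-1)%g z0 (lact (z0^-1)%g f))^-1 *
   \sum_(l < m) a j l (g * z0^-1)%g * w l z0 (lact (z0^-1)%g f)).
  by rewrite P; field; rewrite tau0.
rewrite big_distrr /=; apply: eq_bigr => l _.
by rewrite !mul1r; ring.
Qed.

Lemma e_fin l z i : Hfinsupp (e l z i).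
Proof.
exists [:: lact (z^-1)%g f] => g x; rewrite /e mem_seq1.
by case Hx: (x == lact (z^-1)%g f) => //; rewrite !mul0r eqxx.
Qed.

Lemma natrF : (false%:R : k) = 0. Proof. by []. Qed.
Lemma natrT : (true%:R : k) = 1. Proof. by []. Qed.

Lemma quad (t1 t2 t3 t4 : k) : t2 != 0 -> t4 != 0 -> t1 * t2 = t3 * t4 ->
  t4^-1 * t1 = t2^-1 * t3.
Proof.
move=> n2 n4 H; have -> : t1 = t3 * t4 / t2 by rewrite -H mulfK.
by field; rewrite n2 n4.
Qed.

Lemma e_in l z : in_cotensor lact tau f a (e l z).
Proof.
move=> j g1 f1 g2 f2; rewrite /VFcoact /Hlcoact Hcoprod_E.
case Hg1: (g1 \in stab); last first.
  by rewrite natrF big1 ?mul0r // => i _; rewrite !mul0r.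
rewrite /e.
case Hf: (f2 == lact (z^-1)%g f); last first.
  by rewrite natrF big1 ?(mulr0, mul0r) // => i _; rewrite !(mulr0, mul0r).
move/eqP: Hf => ->.
rewrite -mulgA (stabMl _ Hg1).
case Hs: ((g2 * z^-1)%g \in stab); last first.
  by rewrite big1 ?(mulr0, mul0r) // => i _; rewrite !(mulr0, mul0r).
have E : lact g2 (lact (z^-1)%g f) = f.
  by rewrite -{1}(mulgKV z g2) lactM lactV; move: Hs; rewrite inE => /eqP.
rewrite E !natrT.
set h := (g2 * z^-1)%g; set x' := lact (z^-1)%g f.
have C := coc g1 h z x'; rewrite lactV mulgKV -/x' in C.
transitivity ((f1 == f)%:R * (tau h z x')^-1 * \sum_(i < m) a j i g1 * a i l h).
  rewrite big_distrr /=; apply: eq_bigr => i _; ring.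
rewrite Vcoass //.
have Q := quad (tau0 _ _ _) (tau0 _ _ _) C.
transitivity ((f == f1)%:R * a j l (g1 * h)%g * ((tau h z x')^-1 * tau g1 h f)).
  rewrite eq_sym; ring.
rewrite Q; ring.
Qed.


Lemma psi_e l l' z z' : z \in T -> z' \in T ->
  psi l' z' (e l z) = ((l == l') && (z == z'))%:R.
Proof.
move=> Tz Tz'; rewrite /psi /e.
case: (eqVneq z z') => [<-|Hne].
  rewrite mulgV stab1 eqxx tau1l invr1 !mul1r Vcounit andbT. reflexivity.
case: (Tuniq z') => z0 Tz0 Hu.
have E0 : z' = z0 by apply/eqP; rewrite -Hu // mulgV stab1.
have -> : ((z' * z^-1)%g \in stab) = false.
  by rewrite Hu // -E0; apply/negbTE.
by rewrite andbF natrF !(mulr0, mul0r).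
Qed.

Lemma phi_fin g2 f2 (w : W) i : Hfinsupp (phi g2 f2 w i).
Proof.
exists [:: lact g2 f2] => g1 f1; rewrite /phi Hcoprod_E mem_seq1.
case Hx: (lact g2 f2 == f1); last by rewrite natrF mulr0 eqxx.
by move/eqP: Hx => ->.
Qed.

Lemma phi_in g2 f2 (w : W) : in_cotensor lact tau f a w ->
  in_cotensor lact tau f a (phi g2 f2 w).
Proof.
move=> Hw j h f1' g1 f1; rewrite /VFcoact /Hlcoact /phi !Hcoprod_E.
under eq_bigr do rewrite Hcoprod_E.
case Hh: (h \in stab); last first.
  by rewrite natrF big1 ?mul0r // => i _; rewrite !mul0r.
case Hx: (lact g2 f2 == f1); last first.
  by rewrite natrF big1 ?(mulr0, mul0r) // => i _; rewrite !(mulr0, mul0r).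
move/eqP: Hx => <-; rewrite -lactM natrT.
case Hgf: (lact (g1 * g2)%g f2 == f).
  move/eqP: Hgf => Hgf; rewrite Hgf.
  have P := propag j Hw Hh Hgf.
  have C := coc h g1 g2 f2.
  transitivity ((f1' == f)%:R * tau g1 g2 f2 * \sum_(i < m) a j i h * w i (g1 * g2)%g f2).
    by rewrite big_distrr /=; apply: eq_bigr => i _; ring.
  rewrite P mulgA eq_sym.
  transitivity ((f == f1')%:R * w j (h * g1 * g2)%g f2 * (tau h (g1 * g2)%g f2 * tau g1 g2 f2)).
    by ring.
  by rewrite -C; ring.
have Hne : forall i (g : G), lact g f2 != f -> w i g f2 = 0.
  by move=> i g Hg; apply/eqP; apply: contraNT Hg => /(supp Hw) ->.
rewrite big1; last by move=> i _; rewrite Hne ?Hgf // !(mulr0, mul0r).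
rewrite Hne ?(mulr0, mul0r) //.
rewrite -mulgA lactM; apply: contraFN Hgf => /eqP Hf.
by rewrite -(lactVK h (lact _ f2)) Hf; move: Hh; rewrite -stabV inE.
Qed.


Lemma conjK (x z : G) : (z^-1 * (z * x * z^-1) * z)%g = x.
Proof. by rewrite !mulgA mulVg mul1g mulgKV. Qed.

Lemma conjK2 (x z : G) : (z * (z^-1 * x * z) * z^-1)%g = x.
Proof. by rewrite !mulgA mulgV mul1g mulgK. Qed.

Lemma tau_conj (g z g2 : G) : g \in stab -> g2 = (z^-1 * g * z)%g ->
  (tau g z (lact (z^-1)%g f))^-1 * tau z g2 (lact (z^-1)%g f)
  = (tau (z^-1)%g g f)^-1 * tau g2 (z^-1)%g f.
Proof.
move=> Hg Eg2.
have C1 := coc z g2 (z^-1)%g f.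
have e1 : (z * g2)%g = (g * z)%g by rewrite Eg2 mulgA mulKVg.
have e2 : (g2 * z^-1)%g = (z^-1 * g)%g by rewrite Eg2 mulgK.
rewrite e1 e2 in C1.
have C2 := coc z (z^-1)%g g f.
move: Hg; rewrite inE => /eqP Hg.
rewrite Hg mulgV tau1l mulr1 in C2.
have C3 := coc g z (z^-1)%g f.
rewrite mulgV tau1r mul1r in C3.
have EA : tau z g2 (lact (z^-1)%g f) =
   tau z (z^-1 * g)%g f * tau g2 (z^-1)%g f / tau (g * z)%g (z^-1)%g f.
  by rewrite -C1 mulfK.
have EQ : tau g z (lact (z^-1)%g f) =
   tau z (z^-1 * g)%g f * tau (z^-1)%g g f / tau (g * z)%g (z^-1)%g f.
  by rewrite -C2 -C3 mulfK.
by rewrite EA EQ; field; rewrite !tau0.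
Qed.

Lemma term3 l z g2 f2 :
  psi l z (phi g2 f2 (e l z)) =
  \sum_(g in stab) (tau (z^-1)%g g f)^-1 * tau (z^-1 * g * z)%g (z^-1)%g f
     * a l l g * pb k (z^-1 * g * z)%g (lact (z^-1)%g f) g2 f2.
Proof.
rewrite /psi /phi Hcoprod_E /e /pb.
case Hs: ((z * g2 * z^-1)%g \in stab); last first.
  rewrite natrF !(mulr0, mul0r) big1 // => g Hg.
  case Hx: (g2 == (z^-1 * g * z)%g); last by rewrite andFb natrF mulr0.
  by move: Hs; move/eqP: Hx => ->; rewrite conjK2 Hg.
move: Hs; move Eg: (z * g2 * z^-1)%g => g Hs.
have Eg2 : g2 = (z^-1 * g * z)%g by rewrite -Eg conjK.
rewrite (bigD1 g) //= big1 ?addr0; last first.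
  move=> g' /andP [_ Hg'].
  case Hx: (g2 == (z^-1 * g' * z)%g); last by rewrite andFb natrF mulr0.
  by move/eqP: Hx Hg' => Hx; rewrite -Eg Hx conjK2 eqxx.
have TC := tau_conj Hs Eg2.
rewrite -Eg2 eqxx andTb.
case Hf: (f2 == lact (z^-1)%g f); last by rewrite natrF !(mulr0, mul0r).
move/eqP: Hf => ->.
have E : lact g2 (lact (z^-1)%g f) = lact (z^-1)%g f.
  by rewrite Eg2 !lactM lactV; move: Hs; rewrite inE => /eqP ->.
rewrite E eqxx !natrT.
transitivity (a l l g * ((tau g z (lact (z^-1)%g f))^-1 *
   tau z g2 (lact (z^-1)%g f))); first by ring.
by rewrite TC; ring.
Qed.


Lemma trace_thm n (b : 'I_n -> W) (c : 'I_n -> 'I_n -> G -> F -> k) :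
  induced_basis lact tau f a b -> induced_coaction_coeffs lact tau b c ->
  forall g2 f2, \sum_(l < n) c l l g2 f2 =
     \sum_(l0 < m) \sum_(z in T) psi l0 z (phi g2 f2 (e l0 z)).
Proof.
move=> [Hb [Hind Hspan]] [_ Hc] g2 f2.
have HD : forall l0 z, exists d : 'I_n -> k, forall i g x,
    e l0 z i g x = \sum_(j < n) d j * b j i g x.
  by move=> l0 z; apply: Hspan; [move=> i; apply: e_fin | exact: e_in].
pose D l0 z := proj1_sig (constructive_indefinite_description _ (HD l0 z)).
have HDs : forall l0 z i g x, e l0 z i g x = \sum_(j < n) D l0 z j * b j i g x.
  by move=> l0 z; exact: (proj2_sig (constructive_indefinite_description _ (HD l0 z))).
pose B j l0 z := psi l0 z (b j).
have C1 : forall j j', \sum_(l0 < m) \sum_(z in T) B j l0 z * D l0 z j' = (j == j')%:R.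
  move=> j j'.
  have H := Hind (fun j' => \sum_(l0 < m) \sum_(z in T) B j l0 z * D l0 z j' - (j == j')%:R).
  apply/eqP; rewrite -subr_eq0; apply/eqP; apply: H => i g x.
  rewrite (eq_bigr _ (fun j' _ => mulrBl _ _ _)) sumrB.
  have S2 : \sum_(j' < n) (j == j')%:R * b j' i g x = b j i g x.
    rewrite (bigD1 j) //= eqxx mul1r big1 ?addr0 // => j'' Hj.
    by rewrite eq_sym (negbTE Hj) mul0r.
  rewrite S2; apply/eqP; rewrite subr_eq0; apply/eqP.
  rewrite [RHS](recon i g x (Hb j).2).
  under eq_bigr do rewrite big_distrl /=.
  under eq_bigr do under eq_bigr do rewrite big_distrl /=.
  rewrite exchange_big; apply: eq_bigr => l0 _; rewrite exchange_big.
  apply: eq_bigr => z _; rewrite HDs big_distrr; apply: eq_bigr => j'' _.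
  by rewrite /B /= mulrA.
have E1 : forall l0 z, psi l0 z (phi g2 f2 (e l0 z)) =
    \sum_(j < n) \sum_(j'' < n) D l0 z j * B j'' l0 z * c j'' j g2 f2.
  move=> l0 z; rewrite /psi /phi Hcoprod_E HDs !big_distrl /=.
  apply: eq_bigr => j _.
  have := Hc j l0 z (lact (z^-1)%g f) g2 f2; rewrite Hcoprod_E => H.
  transitivity (D l0 z j * (b j l0 (z * g2)%g f2 * tau z g2 f2 *
    (lact g2 f2 == lact (z^-1)%g f)%:R)); first by ring.
  by rewrite H big_distrr; apply: eq_bigr => j'' _; rewrite /B /psi /=; ring.
under [RHS]eq_bigr do under eq_bigr do rewrite E1.
transitivity (\sum_(j < n) \sum_(j'' < n) c j'' j g2 f2 * (j'' == j)%:R).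
  apply: eq_bigr => j _; rewrite (bigD1 j) //= eqxx mulr1 big1 ?addr0 // => j'' Hj.
  by rewrite (negbTE Hj) mulr0.
transitivity (\sum_(j < n) \sum_(j'' < n) \sum_(l0 < m) \sum_(z in T)
    D l0 z j * B j'' l0 z * c j'' j g2 f2).
  apply: eq_bigr => j _; apply: eq_bigr => j'' _.
  rewrite -C1 big_distrr /=; apply: eq_bigr => l0 _.
  rewrite big_distrr /=; apply: eq_bigr => z _; ring.
under [LHS]eq_bigr => j _ do rewrite exchange_big.
under [LHS]eq_bigr => j _ do under eq_bigr => l0 _ do rewrite exchange_big.
rewrite [LHS]exchange_big; apply: eq_bigr => l0 _.
by rewrite [LHS]exchange_big.
Qed.


Lemma char_formula n (b : 'I_n -> W) (c : 'I_n -> 'I_n -> G -> F -> k) :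
  induced_basis lact tau f a b -> induced_coaction_coeffs lact tau b c ->
  forall g2 f2, character_from c g2 f2 = prop52_rhs lact tau f a T g2 f2.
Proof.
move=> Hb Hc g2 f2; rewrite /character_from (trace_thm Hb Hc) /prop52_rhs.
by apply: eq_bigr => l0 _; apply: eq_bigr => z _; rewrite term3.
Qed.

Definition Aset := [set p : 'I_m * G | p.2 \in T].
Definition bE (j : 'I_#|Aset|) : W := e (enum_val j).1 (enum_val j).2.
Definition cE (j l : 'I_#|Aset|) : G -> F -> k := fun g2 f2 =>
  psi (enum_val j).1 (enum_val j).2 (phi g2 f2 (bE l)).

Lemma recon_enum (w : W) i g x : in_cotensor lact tau f a w ->
  w i g x = \sum_(j < #|Aset|) psi (enum_val j).1 (enum_val j).2 w * bE j i g x.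
Proof.
move=> Hw; rewrite (recon i g x Hw) pair_big_dep /=.
rewrite -(big_enum_val (fun p : 'I_m * G => psi p.1 p.2 w * e p.1 p.2 i g x)).
by apply: eq_bigl => p; rewrite inE.
Qed.

Lemma existence : induced_basis lact tau f a bE /\ induced_coaction_coeffs lact tau bE cE.
Proof.
split; [split; [|split] | split].
- by move=> l; split; [move=> i; apply: e_fin | apply: e_in].
- move=> cc H l'.
  have Tl' : (enum_val l').2 \in T by have := enum_valP l'; rewrite inE.
  have := H (enum_val l').1 (enum_val l').2 (lact ((enum_val l').2^-1)%g f).
  have E : forall l, bE l (enum_val l').1 (enum_val l').2
                      (lact ((enum_val l').2^-1)%g f) = (l == l')%:R.
    move=> l; have Tl : (enum_val l).2 \in T by have := enum_valP l; rewrite inE.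
    have := psi_e (enum_val l).1 (enum_val l').1 Tl Tl'; rewrite /psi /bE => ->.
    by rewrite -xpair_eqE -!surjective_pairing (inj_eq enum_val_inj).
  under eq_bigr do rewrite E.
  rewrite (bigD1 l') //= eqxx mulr1 big1 ?addr0 // => j Hj.
  by rewrite (negbTE Hj) mulr0.
- move=> w _ Hw; exists (fun j => psi (enum_val j).1 (enum_val j).2 w) => i g x.
  exact: recon_enum.
- move=> j l; exists [seq lact y f | y <- enum G] => g2 f2.
  rewrite /cE /psi /phi Hcoprod_E => Hne.
  apply: (@orb_mem ((enum_val j).2 * g2)%g).
  apply: (@supp (bE l) (enum_val j).1); first exact: e_in.
  by apply: contraNneq Hne => ->; rewrite !mul0r.
- move=> l i g1 f1 g2 f2.
  rewrite -[LHS]/(phi g2 f2 (bE l) i g1 f1) (recon_enum i g1 f1 (phi_in g2 f2 (e_in _ _))).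
  by apply: eq_bigr => j _; rewrite mulrC.
Qed.

End Proof.

Theorem proposition5p2
  (k : closedFieldType) (k_char0 : [pchar k] =i pred0)
  (F : groupType) (G : finGroupType)
  (lact : G -> F -> F) (ract : G -> F -> G)
  (mp : matched_pair lact ract)
  (sigma : G -> F -> F -> k) (tau : G -> G -> F -> k)
  (st : sigma_tau_conditions lact ract sigma tau)
  (f : F) (T : {set G})
  (T1 : 1%g \in T)
  (Ttrans : is_transversal T (rcosets (stab lact f) [set: G]) [set: G])
  (m : nat) (a : 'I_m -> 'I_m -> G -> k)
  (Vcom : Vcomodule lact tau f a)
  (Vsim : Vsimple lact f a) :
  (exists (n : nat) (b : 'I_n -> 'I_m -> G -> F -> k)
          (c : 'I_n -> 'I_n -> G -> F -> k),
      induced_basis lact tau f a b /\ induced_coaction_coeffs lact tau b c) /\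
  (forall (n : nat) (b : 'I_n -> 'I_m -> G -> F -> k)
          (c : 'I_n -> 'I_n -> G -> F -> k),
      induced_basis lact tau f a b -> induced_coaction_coeffs lact tau b c ->
      forall (g : G) (f' : F),
        character_from c g f' = prop52_rhs lact tau f a T g f').
Proof.
case: mp => lact1 [lactM _].
case: st => _ [tau0 [_ [_ [_ [_ [tau1l [tau1r [_ [coc _]]]]]]]]].
case: Vcom => Vcoass Vcounit.
split.
  eexists _, _, _; apply: existence; eassumption.
move=> n b c Hb Hc g f'.
by apply: char_formula; eassumption.
Qed.
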